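(* Let $A \in \mathbb{R}^{n\times d}$ and let $\lbrace w_l : l \geq 0\rbrace \subset \mathbb{R}^n$ be an arbitrary sequence. Let $\mathcal{R}_0 = \lbrace 0 \rbrace \subset \mathbb{R}^d$ and $\mathcal{R}_l = \mathrm{span}\lbrace A'w_0,\ldots,A'w_{l-1}\rbrace$ for $l \geq 1$. Let $S_0 = I_d$ and for $l \geq 0$ define $$S_{l+1} = \begin{cases} S_l - \dfrac{S_l A' w_l w_l' A S_l}{w_l' A S_l A' w_l} & \text{if } S_l A' w_l \neq 0,\\ S_l & \text{otherwise.}\end{cases}$$ Then for every $l \geq 0$, $S_l$ is an orthogonal projection matrix onto $\mathcal{R}_l^{\perp}$.
   Context: $A'$ denotes the transpose of $A$; $I_d$ is the $d\times d$ identity matrix. *)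

(* Defs.v *)
(* Vectors of R^n are column vectors 'cV[R]_n; A' is A^T. *)
From HB Require Import structures.
From mathcomp Require Import all_boot all_order all_algebra.
Set Implicit Arguments. Unset Strict Implicit. Unset Printing Implicit Defensive.
Import Order.TTheory GRing.Theory Num.Theory.
Local Open Scope ring_scope.

Definition proj_step (R : realFieldType) (n d : nat) (A : 'M[R]_(n, d))
  (wl : 'cV[R]_n) (S : 'M[R]_d) : 'M[R]_d :=
  if S *m A^T *m wl != 0 then
    S - ((wl^T *m A *m S *m A^T *m wl) 0 0)^-1 *:
          (S *m A^T *m wl *m wl^T *m A *m S)
  else S.

Fixpoint proj_seq (R : realFieldType) (n d : nat) (A : 'M[R]_(n, d))
  (w : nat -> 'cV[R]_n) (l : nat) : 'M[R]_d :=
  match l with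
  | 0 => 1%:M
  | l'.+1 => proj_step A (w l') (proj_seq A w l')
  end.

(* Matrix whose rows are (A' w_0)', ..., (A' w_{l-1})'; its row space is R_l
   (for l = 0 it is the empty matrix, whose row space is {0}). *)
Definition gen_mx (R : realFieldType) (n d : nat) (A : 'M[R]_(n, d))
  (w : nat -> 'cV[R]_n) (l : nat) : 'M[R]_(l, d) :=
  \matrix_(i < l) (A^T *m w i)^T.

Definition in_perp (R : realFieldType) (n d : nat) (A : 'M[R]_(n, d))
  (w : nat -> 'cV[R]_n) (l : nat) (x : 'cV[R]_d) : Prop :=
  forall y : 'rV[R]_d, (y <= gen_mx A w l)%MS -> y *m x = 0.

Definition orth_proj_onto (R : realFieldType) (d : nat) (P : 'M[R]_d)
  (V : 'cV[R]_d -> Prop) : Prop :=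
  [/\ P^T = P, P *m P = P &
      forall x : 'cV[R]_d, (exists y : 'cV[R]_d, x = P *m y) <-> V x].

(* Main.v *)
Require Import Defs.
From HB Require Import structures.
From mathcomp Require Import all_boot all_order all_algebra.
From Stdlib Require Import Setoid.
Import Order.TTheory GRing.Theory Num.Theory.
Local Open Scope ring_scope.
Set Implicit Arguments. Unset Strict Implicit.

Section S.
Variables (R : realFieldType) (d : nat).

Lemma vTv_neq0 (v : 'cV[R]_d) : v != 0 -> (v^T *m v) 0 0 != 0.
Proof.
move=> nz; apply: contraNneq nz => H; apply/eqP/matrixP => i j.
rewrite (ord1 j) mxE.
move: H; rewrite mxE => /eqP; rewrite psumr_eq0 => [/allP H|k _]; last first.
  by rewrite mxE sqr_ge0 // -expr2 sqr_ge0.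
have := H i (mem_index_enum _); rewrite mxE -expr2 sqrf_eq0 => /eqP //.
Qed.

Lemma step_props (P : 'M[R]_d) (v : 'cV[R]_d) : P^T = P -> P *m P = P ->
  P *m v = v -> v != 0 ->
  let c := (v^T *m v) 0 0 in let Q := P - c^-1 *: (v *m v^T) in
  [/\ Q^T = Q, Q *m Q = Q & forall x : 'cV[R]_d, Q *m x = x <-> (P *m x = x /\ v^T *m x = 0)].
Proof.
move=> PT PP Pv nz c Q.
have c0 : c != 0 by exact: vTv_neq0.
have vvc : v^T *m v = c%:M by rewrite [LHS]mx11_scalar.
have vP : v^T *m P = v^T by rewrite -{1}PT -trmx_mul Pv.
have vvv : v *m v^T *m (v *m v^T) = c *: (v *m v^T).
  by rewrite mulmxA -(mulmxA v) vvc mul_mx_scalar scalemxAl.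
have vQ : v^T *m Q = 0.
  rewrite /Q mulmxBr vP -scalemxAr mulmxA vvc mul_scalar_mx scalerA mulVf //.
  by rewrite scale1r subrr.
split.
- by rewrite /Q linearB /= linearZ /= trmx_mul trmxK PT.
- rewrite /Q mulmxBl !mulmxBr PP -!scalemxAr -!scalemxAl !mulmxA Pv.
  rewrite -(mulmxA v _ P) vP -(mulmxA v (v^T) v) vvc mul_mx_scalar.
  rewrite -!scalemxAl !scalerA mulfVK //.
  by rewrite subrr subr0.
move=> x; split.
- move=> Qx.
  have vx : v^T *m x = 0 by rewrite -Qx mulmxA vQ mul0mx.
  split=> //.
  move: Qx; rewrite /Q mulmxBl -scalemxAl -mulmxA vx mulmx0 scaler0 subr0 //.
case=> Px vx.
by rewrite /Q mulmxBl -scalemxAl -mulmxA vx mulmx0 scaler0 subr0.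
Qed.

End S.

Lemma in_perpE (R : realFieldType) (n d : nat) (A : 'M[R]_(n, d))
  (w : nat -> 'cV[R]_n) (l : nat) (x : 'cV[R]_d) :
  in_perp A w l x <-> forall i, (i < l)%N -> (A^T *m w i)^T *m x = 0.
Proof.
split.
- move=> H i il; apply: H.
  have -> : (A^T *m w i)^T = row (Ordinal il) (gen_mx A w l) by rewrite rowK.
  exact: row_sub.
move=> H y /mulmxKpV <-; rewrite -!mulmxA.
have -> : gen_mx A w l *m x = 0.
  apply/row_matrixP => i; rewrite row_mul rowK row0; exact: H i (ltn_ord i).
by rewrite !mulmx0.
Qed.

Theorem mainTheorem2 (R : realFieldType) (n d : nat) (A : 'M[R]_(n, d))
  (w : nat -> 'cV[R]_n) (l : nat) :
  orth_proj_onto (proj_seq A w l) (in_perp A w l).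
Proof.
suff [PT PP Hx] : [/\ (proj_seq A w l)^T = proj_seq A w l,
   proj_seq A w l *m proj_seq A w l = proj_seq A w l &
   forall x, proj_seq A w l *m x = x <-> in_perp A w l x].
  split=> // x; split; last by move/Hx => <-; exists x.
  by case=> y ->; apply/Hx; rewrite mulmxA PP.
elim: l => [|l [PT PP Hx]] /=.
  split; [exact: trmx1 | exact: mulmx1 | ] => x.
  rewrite mul1mx in_perpE; split=> // _ i //.
set P := proj_seq A w l.
have key : forall x, in_perp A w l.+1 x <-> P *m x = x /\ (A^T *m w l)^T *m x = 0.
  move=> x; rewrite in_perpE Hx in_perpE; split.
    by move=> H; split => [i il|]; [apply: H; exact: ltnW | exact: H].
  by case=> H0 H1 i; rewrite ltnS leq_eqVlt => /orP[/eqP->//|]; exact: H0.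
set v := P *m A^T *m w l.
have vT : v^T = (A^T *m w l)^T *m P by rewrite /v -mulmxA trmx_mul PT.
have Pv : P *m v = v by rewrite /v !mulmxA PP.
have den : (w l)^T *m A *m P *m A^T *m w l = v^T *m v.
  by rewrite vT /v trmx_mul trmxK !mulmxA -(mulmxA _ P P) PP.
have num : P *m A^T *m w l *m (w l)^T *m A *m P = v *m v^T.
  by rewrite vT /v trmx_mul trmxK !mulmxA.
rewrite /proj_step -/v; case: ifP => vnz.
  rewrite den num; have [QT QQ QH] := step_props PT PP Pv vnz.
  split=> // x; rewrite QH key; split; case=> Px H; split=> //.
    by rewrite -H vT -mulmxA Px.
  by rewrite vT -mulmxA Px.
split=> // x; rewrite key; split=> [Px|[]//]; split=> //.
by rewrite -{1}Px mulmxA -vT (eqP (negbFE vnz)) trmx0 mul0mx.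
Qed.
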